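(* Let $p$ be a prime number, let $u \geqslant 1$ and $n \geqslant m \geqslant 1$ be integers, and let $$f(x) = a_{n}x^{n} + a_{n-1}x^{n-1} + \cdots + a_{m}x^{m} + p^{u} \in \mathbb{Z}[x]$$ with $a_n \neq 0$. Suppose that $p \nmid a_{m}$, that $\gcd(u, m) = 1$, and that $$p^{u} > |a_{n}| + |a_{n-1}| + \cdots + |a_{m}|.$$ Then $f(x)$ is irreducible over $\mathbb{Q}$. *)

(* Defs.v *)
From mathcomp Require Import all_boot all_order all_algebra.
Set Implicit Arguments. Unset Strict Implicit. Unset Printing Implicit Defensive.
Import Order.TTheory GRing.Theory Num.Theory.
Local Open Scope ring_scope.

Definition fpoly (a : nat -> int) (m n : nat) (p u : nat) : {poly int} :=
  \sum_(m <= i < n.+1) (a i)%:P * 'X^i + ((p ^ u)%N%:Z)%:P.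

(* Main.v *)
Require Import Defs.
From mathcomp Require Import all_boot all_order all_algebra algC.
From mathcomp Require Import zify.
From Stdlib Require Import Lia.
Import Order.TTheory GRing.Theory Num.Theory.
Local Open Scope ring_scope.

Lemma coefF (a : nat -> int) m n p u k : (1 <= m)%N ->
  (fpoly a m n p u)`_k = (if (m <= k <= n)%N then a k else 0) + (if k == 0%N then (p ^ u)%N%:Z else 0).
Proof.
move=> m1; rewrite /fpoly coefD coefC; congr (_ + _).
rewrite coef_sum.
under eq_bigr do rewrite coefCM coefXn.
case: ifP => [/andP[h1 h2]|hk].
  rewrite (@big_cat_nat _ _ _ k) /=; [|lia|lia].
  rewrite big1_seq ?add0r; last first.
    move=> i /andP[_]; rewrite mem_iota => /andP[_ hi].
    rewrite (_ : (k == i) = false) ?mulr0 //; lia.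
  rewrite big_ltn; last lia.
  rewrite eqxx mulr1 big1_seq ?addr0 // => i /andP[_]; rewrite mem_iota => /andP[hi _].
  rewrite (_ : (k == i) = false) ?mulr0 //; lia.
rewrite big1_seq // => i /andP[_]; rewrite mem_iota => /andP[hi1 hi2].
rewrite (_ : (k == i) = false) ?mulr0 //; apply/negP => /eqP ek; subst; move/negbT: hk; lia.
Qed.
Definition vz (p : nat) (x : int) : nat := logn p (absz x).
Definition W (p m u : nat) (h : {poly int}) (i : nat) : nat := (m * vz p h`_i + u * i)%N.

Lemma wmin p m u (h : {poly int}) : h != 0 ->
  exists i, h`_i != 0 /\ (forall j, h`_j != 0 -> (W p m u h i <= W p m u h j)%N) /\
    (forall j, (j < i)%N -> h`_j != 0 -> (W p m u h i < W p m u h j)%N).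
Proof.
move=> h0.
have hsz j : h`_j != 0 -> (j < size h)%N.
  by move=> hj; rewrite ltnNge; apply: contra hj => hs; rewrite nth_default.
have ex1 : exists N, [exists j : 'I_(size h), (h`_j != 0) && (W p m u h j == N)].
  have hl : ((size h).-1 < size h)%N by rewrite prednK // size_poly_gt0.
  exists (W p m u h (size h).-1); apply/existsP; exists (Ordinal hl) => /=.
  by rewrite eqxx andbT -lead_coefE lead_coef_eq0.
case: (ex_minnP ex1) => N0 /existsP[j0 /andP[hj0 /eqP Wj0]] minN0.
have ex2 : exists i, (h`_i != 0) && (W p m u h i == N0).
  by exists j0; rewrite hj0 Wj0 eqxx.
case: (ex_minnP ex2) => i /andP[hi /eqP Wi] mini.
have lowb j : h`_j != 0 -> (N0 <= W p m u h j)%N.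
  move=> hj; apply: minN0; apply/existsP; exists (Ordinal (hsz j hj)) => /=.
  by rewrite hj eqxx.
exists i; split=> //; split=> [j hj|j lji hj]; rewrite Wi; first exact: lowb.
rewrite ltn_neqAle lowb // andbT; apply/negP => /eqP e.
have := mini j; rewrite hj -e eqxx => /(_ isT); rewrite leqNgt lji.
by [].
Qed.
Lemma dvd_term p x y E : prime p -> x != 0 -> y != 0 -> (E <= vz p x + vz p y)%N ->
  ((p ^ E)%N%:Z %| x * y)%Z.
Proof.
move=> pp x0 y0 hE; rewrite dvdzE abszM /= pfactor_dvdn //; last first.
  by rewrite muln_gt0 !absz_gt0 x0 y0.
by rewrite lognM ?absz_gt0.
Qed.

Lemma ndvd_main p x y : prime p -> x != 0 -> y != 0 ->
  ~~ ((p ^ (vz p x + vz p y).+1)%N%:Z %| x * y)%Z.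
Proof.
move=> pp x0 y0; rewrite dvdzE abszM /= pfactor_dvdn //; last first.
  by rewrite muln_gt0 !absz_gt0 x0 y0.
by rewrite lognM ?absz_gt0 // ltnn.
Qed.

Lemma prodw p m u (f g : {poly int}) i1 i2 : prime p -> (0 < m)%N ->
  f`_i1 != 0 -> (forall j, f`_j != 0 -> (W p m u f i1 <= W p m u f j)%N) ->
    (forall j, (j < i1)%N -> f`_j != 0 -> (W p m u f i1 < W p m u f j)%N) ->
  g`_i2 != 0 -> (forall j, g`_j != 0 -> (W p m u g i2 <= W p m u g j)%N) ->
    (forall j, (j < i2)%N -> g`_j != 0 -> (W p m u g i2 < W p m u g j)%N) ->
  ~~ ((p ^ (vz p f`_i1 + vz p g`_i2).+1)%N%:Z %| (f * g)`_(i1 + i2))%Z.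
Proof.
move=> pp m0 f1 fle flt g1 gle glt.
have hi : (i1 < (i1 + i2).+1)%N by rewrite ltnS leq_addr.
rewrite coefM (bigD1 (Ordinal hi)) //= addKn.
apply/negP => hd.
have hrest : ((p ^ (vz p f`_i1 + vz p g`_i2).+1)%N%:Z %|
    \sum_(j < (i1 + i2).+1 | j != Ordinal hi) f`_j * g`_(i1 + i2 - j))%Z.
  apply: rpred_sum => j hj.
  have [fj0|fj] := eqVneq f`_j 0; first by rewrite ?fj0 mul0r dvdz0.
  have [gj0|gj] := eqVneq g`_(i1 + i2 - j) 0; first by rewrite ?gj0 mulr0 dvdz0.
  apply: dvd_term => //.
  have jk : (j <= i1 + i2)%N by rewrite -ltnS.
  have hu : (u * j + u * (i1 + i2 - j) = u * i1 + u * i2)%N.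
    by rewrite -!mulnDr subnKC.
  have hne : (j : nat) != i1 by apply: contra hj => /eqP e; apply/eqP/val_inj.
  have key : (m * (vz p f`_i1 + vz p g`_i2) < m * (vz p f`_j + vz p g`_(i1 + i2 - j)))%N.
    case: (ltngtP j i1) hne => // hj1 _.
      have := flt _ hj1 fj; have := gle _ gj; rewrite /W; lia.
    have h2 : (i1 + i2 - j < i2)%N by lia.
    have := glt _ h2 gj; have := fle _ fj; rewrite /W; lia.
  by rewrite ltn_pmul2l in key.
apply/negP: (ndvd_main _ _ _ pp f1 g1).
have -> : f`_i1 * g`_i2 = (f`_i1 * g`_i2 + \sum_(j < (i1 + i2).+1 | j != Ordinal hi) f`_j * g`_(i1 + i2 - j)) - \sum_(j < (i1 + i2).+1 | j != Ordinal hi) f`_j * g`_(i1 + i2 - j) by rewrite addrK.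
by rewrite rpredB.
Qed.
Lemma prod_gt1 (r : seq algC) : r != [::] -> (forall z, z \in r -> 1 < `|z|) ->
  1 < \prod_(z <- r) `|z|.
Proof.
elim: r => // z r IH _ h; rewrite big_cons.
have hz : 1 < `|z| by apply: h; rewrite mem_head.
case: r IH h => [|w r] IH h; first by rewrite big_nil mulr1.
have h2 : 1 < \prod_(z0 <- w :: r) `|z0|.
  by apply: IH => // x hx; apply: h; rewrite in_cons hx orbT.
rewrite -[X in X < _](mulr1 1); apply: ltr_pM => //.
Qed.

Lemma fhasroot (f : {poly int}) : (1 < size f)%N -> absz f`_0 = 1%N ->
  exists z : algC, `|z| <= 1 /\ root (map_poly intr f) z.
Proof.
move=> sf f01.
set fC := map_poly (intr : int -> algC) f.
have f0 : f != 0 by rewrite -size_poly_gt0; lia.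
have lc0 : lead_coef f != 0 by rewrite lead_coef_eq0.
have szC : size fC = size f by apply: size_map_inj_poly => //; apply: intr_inj.
have lcC : lead_coef fC = (lead_coef f)%:~R by rewrite lead_coef_map_inj //; apply: intr_inj.
have lcC0 : lead_coef fC != 0 by rewrite lcC intr_eq0.
have [r Hr] := closed_field_poly_normal fC.
have szr : size f = (size r).+1.
  by rewrite -szC {1}Hr size_scale // size_prod_XsubC.
have rne : r != [::].
  apply/eqP => r0; rewrite r0 /= in szr; by rewrite szr in sf.
have [/hasP[z zr hz]|hn] := boolP (has (fun z : algC => `|z| <= 1) r).
  exists z; split => //.
  by rewrite /root Hr hornerZ horner_prod mulf_eq0 prodf_seq_eq0; apply/orP; right;
     apply/hasP; exists z => //=; rewrite hornerXsubC subrr eqxx.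
exfalso.
have hall : forall z, z \in r -> 1 < `|z|.
  move=> z zr; rewrite real_ltNge ?realE ?normr_ge0 ?ler01 //.
  by apply: contra hn => hz; apply/hasP; exists z.
have hp := prod_gt1 _ rne hall.
have e0 : fC.[0] = (f`_0)%:~R by rewrite horner_coef0 coef_map.
have n1 : `|fC.[0]| = 1.
  rewrite e0 -intr_norm -abszE f01 //.
have n2 : `|fC.[0]| = `|lead_coef fC| * \prod_(z <- r) `|z|.
  rewrite {1}Hr hornerZ horner_prod normrM normr_prod.
  by congr (_ * _); apply: eq_bigr => z _; rewrite hornerXsubC sub0r normrN.
have hlc : 1 <= `|lead_coef fC|.
  rewrite lcC -intr_norm (_ : 1 = 1%:~R) // ler_int.
  by rewrite -abszE lez_nat lt0n absz_eq0.
have : 1 < `|fC.[0]|.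
  rewrite n2; apply: (lt_le_trans hp).
  rewrite -[X in X <= _]mul1r; apply: ler_wpM2r => //.
  by apply: prodr_ge0 => z _; rewrite normr_ge0.
by rewrite n1 ltxx.
Qed.
Lemma noroot (a : nat -> int) m n p u (z : algC) :
  (\sum_(m <= i < n.+1) `|a i|) < ((p ^ u)%N)%:Z -> `|z| <= 1 ->
  ~~ root (map_poly intr (fpoly a m n p u)) z.
Proof.
move=> hs hz; rewrite /root /fpoly rmorphD rmorph_sum /= map_polyC hornerD horner_sum hornerC /=.
under eq_bigr do rewrite rmorphM /= map_polyC map_polyXn hornerCM hornerXn.
apply/negP => /eqP e.
have e2 : ((p ^ u)%N%:Z)%:~R = - \sum_(m <= i < n.+1) (a i)%:~R * z ^+ i :> algC.
  by apply/eqP; rewrite -addr_eq0 addrC e.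
have : `|((p ^ u)%N%:Z)%:~R : algC| <= \sum_(m <= i < n.+1) (`|a i|)%:~R.
  rewrite e2 normrN; apply: (le_trans (ler_norm_sum _ _ _)).
  apply: ler_sum => i _; rewrite normrM intr_norm normrX.
  rewrite -[X in _ <= X]mulr1; apply: ler_wpM2l => //.
  by apply: exprn_ile1 => //.
rewrite -intr_norm -rmorph_sum /= ler_int.
by rewrite ger0_norm // leNgt hs.
Qed.

Lemma vpos p u m n a (f g : {poly int}) : prime p -> (1 <= u)%N -> (1 <= m)%N ->
  (\sum_(m <= i < n.+1) `|a i|) < ((p ^ u)%N)%:Z ->
  fpoly a m n p u = f * g -> (1 < size f)%N -> (0 < vz p f`_0)%N.
Proof.
move=> pp u1 m1 hs hFG sf.
have h0 : f`_0 * g`_0 = (p ^ u)%N%:Z.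
  rewrite -coef0M -hFG coefF // (_ : (m <= 0)%N = false) /=; last lia.
  by rewrite add0r.
rewrite lt0n; apply/negP => /eqP v0.
have hd : (absz (f`_0)%R %| p ^ u)%N by rewrite -[(p ^ u)%N]/(absz (p ^ u)%N%:Z) -h0 abszM dvdn_mulr.
have [k kle ek] := dvdn_pfactor _ _ pp hd.
have k0 : k = 0%N by move: v0; rewrite /vz ek pfactorK.
rewrite k0 expn0 in ek.
have [z [hz rz]] := fhasroot _ sf ek.
have : root (map_poly (intr : int -> algC) (fpoly a m n p u)) z.
  by rewrite hFG rmorphM /= rootM rz.
by apply/negP; apply: noroot.
Qed.

Lemma core p u m n a (f g : {poly int}) : prime p -> (1 <= u)%N -> (1 <= m)%N ->
  ~~ (p%:Z %| a m)%Z -> coprime u m ->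
  (\sum_(m <= i < n.+1) `|a i|) < ((p ^ u)%N)%:Z ->
  fpoly a m n p u = f * g -> (1 < size f)%N -> (1 < size g)%N -> (m <= n)%N -> False.
Proof.
move=> pp u1 m1 ham cop hs hFG sf sg mn.
have p1 : (1 < p)%N by apply: prime_gt1.
have h0 : f`_0 * g`_0 = (p ^ u)%N%:Z.
  rewrite -coef0M -hFG coefF // (_ : (m <= 0)%N = false) /=; last lia.
  by rewrite add0r.
have f00 : f`_0 != 0.
  by apply/eqP => e; move: h0; rewrite e mul0r => /(congr1 absz) /= /eqP; rewrite eq_sym expn_eq0; lia.
have g00 : g`_0 != 0.
  by apply/eqP => e; move: h0; rewrite e mulr0 => /(congr1 absz) /= /eqP; rewrite eq_sym expn_eq0; lia.
have hst : (vz p f`_0 + vz p g`_0 = u)%N.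
  rewrite /vz -lognM ?absz_gt0 // -abszM h0 /=.
  exact: pfactorK.
have s1 := vpos _ _ _ _ _ _ _ pp u1 m1 hs hFG sf.
have t1 : (0 < vz p g`_0)%N.
  apply: (vpos _ _ _ _ _ _ _ pp u1 m1 hs _ sg); rewrite hFG mulrC; reflexivity.
have fn0 : f != 0 by rewrite -size_poly_gt0; lia.
have gn0 : g != 0 by rewrite -size_poly_gt0; lia.
have [i1 [fi1 [fle flt]]] := wmin p m u _ fn0.
have [i2 [gi2 [gle glt]]] := wmin p m u _ gn0.
have hnd := prodw _ _ _ _ _ _ _ pp m1 fi1 fle flt gi2 gle glt.
rewrite -hFG coefF // in hnd.
set E := (vz p f`_i1 + vz p g`_i2)%N in hnd.
have hW : (W p m u f i1 + W p m u g i2 = m * E + u * (i1 + i2))%N.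
  by rewrite /W /E mulnDr mulnDr; lia.
have bnd : (m * u <= m * E + u * (i1 + i2))%N.
  case: (ltnP (i1 + i2) m) => hk; last first.
    have : (u * m <= u * (i1 + i2))%N by rewrite leq_mul2l hk orbT.
    by rewrite mulnC => h; apply: leq_trans h (leq_addl _ _).
  case: (posnP (i1 + i2)) => hk0.
    rewrite hk0 /= (_ : (m <= 0)%N = false) ?add0r in hnd; last by rewrite leqNgt m1.
    have hue : (u <= E)%N.
      rewrite leqNgt; apply/negP => hlt; move/negP: hnd; apply.
      by rewrite dvdzE /= dvdn_exp2l.
    rewrite hk0 muln0 addn0 leq_mul2l hue orbT //.
  rewrite (_ : (m <= i1 + i2 <= n)%N = false) in hnd; last by rewrite leqNgt hk.
  rewrite (_ : (i1 + i2 == 0)%N = false) in hnd; last by apply/negbTE; rewrite -lt0n.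
  by rewrite addr0 dvdz0 in hnd.
have wf0 : (W p m u f i1 <= m * vz p f`_0)%N.
  by have := fle 0%N f00; rewrite /W muln0 addn0.
have wg0 : (W p m u g i2 <= m * vz p g`_0)%N.
  by have := gle 0%N g00; rewrite /W muln0 addn0.
have Fm : (fpoly a m n p u)`_m = a m.
  rewrite coefF // leqnn mn /= (_ : (m == 0)%N = false) ?addr0 //; by apply/negbTE; rewrite -lt0n.
have [j hj] : exists j : 'I_m.+1, ~~ (p%:Z %| f`_j * g`_(m - j))%Z.
  apply/existsP; apply: contraR ham => /existsPn h.
  rewrite -Fm hFG coefM; apply: rpred_sum => j _.
  by move: (h j); rewrite negbK.
have hfj : ~~ (p%:Z %| f`_j)%Z by apply: contra hj => hh; apply: dvdz_mulr.
have hgj : ~~ (p%:Z %| g`_(m - j))%Z by apply: contra hj => hh; apply: dvdz_mull.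
have fj0 : f`_j != 0 by apply: contra hfj => /eqP ->; rewrite dvdz0.
have gj0 : g`_(m - j) != 0 by apply: contra hgj => /eqP ->; rewrite dvdz0.
have vfj : vz p f`_j = 0%N.
  apply/eqP; rewrite -leqn0 leqNgt; apply: contra hfj => hh.
  by rewrite dvdzE /= -(expn1 p) pfactor_dvdn // absz_gt0.
have vgj : vz p g`_(m - j) = 0%N.
  apply/eqP; rewrite -leqn0 leqNgt; apply: contra hgj => hh.
  by rewrite dvdzE /= -(expn1 p) pfactor_dvdn // absz_gt0.
have wfj : (W p m u f i1 <= u * j)%N by have := fle _ fj0; rewrite /W vfj muln0.
have wgj : (W p m u g i2 <= u * (m - j))%N by have := gle _ gj0; rewrite /W vgj muln0.
have jm : (j <= m)%N by rewrite -ltnS.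
have huj : (u * j + u * (m - j) = u * m)%N by rewrite -mulnDr subnKC.
have hms : (m * vz p f`_0 + m * vz p g`_0 = m * u)%N by rewrite -mulnDr hst.
have e1 : (m * vz p f`_0 = u * j)%N.
  clear -hW bnd wf0 wg0 wfj wgj huj hms; lia.
have e2 : (m * vz p g`_0 = u * (m - j))%N.
  clear -hW bnd wf0 wg0 wfj wgj huj hms; lia.
have mdj : (m %| j)%N.
  rewrite -(@Gauss_dvdr m u j); first by rewrite -e1 dvdn_mulr.
  by rewrite coprime_sym.
have j0 : (0 < j)%N.
  rewrite lt0n; apply/negP => /eqP j0; move: e1; rewrite j0 muln0 => /eqP.
  by rewrite muln_eq0 (negbTE (lt0n_neq0 m1)) /= => /eqP v; rewrite v in s1.
have jme : j = m :> nat by apply/eqP; rewrite eqn_leq jm dvdn_leq.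
move: e2; rewrite jme subnn muln0 => /eqP; rewrite muln_eq0 (negbTE (lt0n_neq0 m1)) /= => /eqP v; by rewrite v in t1.
Qed.

Theorem theorem1 (p u m n : nat) (a : nat -> int) :
  prime p -> (1 <= u)%N -> (1 <= m)%N -> (m <= n)%N ->
  a n != 0 ->
  ~~ (p%:Z %| a m)%Z ->
  coprime u m ->
  (\sum_(m <= i < n.+1) `|a i|) < ((p ^ u)%N)%:Z ->
  irreducible_poly (map_poly (intr : int -> rat) (fpoly a m n p u)).
Proof.
move=> pp u1 m1 mn an0 ham cop hs.
have Fn : (fpoly a m n p u)`_n = a n.
  rewrite coefF // mn leqnn /= (_ : (n == 0)%N = false) ?addr0 //.
  by apply/negbTE; rewrite -lt0n (leq_trans m1 mn).
have qN0 : fpoly a m n p u != 0 by apply: contra an0 => /eqP e; rewrite -Fn e coef0.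
have szF : (1 < size (fpoly a m n p u))%N.
  apply: (@leq_trans n.+1); first by rewrite ltnS (leq_trans m1 mn).
  by rewrite ltnNge; apply: contra an0 => h; rewrite -Fn nth_default.
split.
  by rewrite size_map_poly_id0 ?intr_eq0 ?lead_coef_eq0.
move=> f' + /dvdpP_rat_int[f [d dN0 feq]]; rewrite {f'}feq size_scale// => fN1.
move=> /= [g q_eq]; rewrite q_eq (eqp_trans (eqp_scale _ _))//.
have fN0 : f != 0 by apply: contra_neq qN0; rewrite q_eq => ->; rewrite mul0r.
have gN0 : g != 0 by apply: contra_neq qN0; rewrite q_eq => ->; rewrite mulr0.
rewrite size_map_poly_id0 ?intr_eq0 ?lead_coef_eq0// in fN1.
have [/eqP/size_poly1P[c cN0 ->]|gN1] := eqVneq (size g) 1%N.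
  by rewrite mulrC mul_polyC map_polyZ/= eqp_sym eqp_scale// intr_eq0.
exfalso; apply: (core _ _ _ _ _ f g pp u1 m1 ham cop hs q_eq) => //.
  by rewrite ltn_neqAle eq_sym fN1 size_poly_gt0.
by rewrite ltn_neqAle eq_sym gN1 size_poly_gt0.
Qed.
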